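(* For every $n\ge 2$, if $\Delta,\Delta'\in\mathcal{P}_n$ form a special pair for rule $162$, then $lab_\Delta((i+1,i))=lab_{\Delta'}((i+1,i))$ for all $i\in\mathbb{Z}_n$.
   Context: Cells are indexed by $\mathbb{Z}_n=\{0,\dots,n-1\}$, indices modulo $n$. Rule $162$ has local rule $r_{162}(x_1,x_2,x_3)=(x_1\vee\neg x_2)\wedge x_3$ and global function $f_{162,n}(x)_i=r_{162}(x_{i-1},x_i,x_{i+1})$. An update schedule is an ordered partition $\Delta=(\Delta_1,\dots,\Delta_k)$ of $\mathbb{Z}_n$ into nonempty blocks; $\mathcal{P}_n$ is the set of them. For a block $B$ let $f^{(B)}(x)_i=f_{162,n}(x)_i$ if $i\in B$ and $x_i$ otherwise; $f^{(\Delta)}_{162,n}=f^{(\Delta_k)}\circ\cdots\circ f^{(\Delta_1)}$. For $u,v\in\mathbb{Z}_n$ with $u\in\Delta_a$, $v\in\Delta_b$, $lab_\Delta((u,v))=\oplus$ if $b\le a$ and $\ominus$ if $a<b$. $\Delta\equiv\Delta'$ iff $lab_\Delta$ and $lab_{\Delta'}$ agree on every arc $(i,i+1)$ and $(i+1,i)$. A pair $\Delta,\Delta'$ is special for rule $162$ if $\Delta\not\equiv\Delta'$ but $f^{(\Delta)}_{162,n}=f^{(\Delta')}_{162,n}$. *)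

(* Defs.v *)
From mathcomp Require Import all_boot.
Set Implicit Arguments. Unset Strict Implicit. Unset Printing Implicit Defensive.

(* Cells are 'I_n; i+1 and i-1 modulo n are ordS i and ord_pred i. *)

Definition r162 (x1 x2 x3 : bool) : bool := (x1 || ~~ x2) && x3.

Definition config (n : nat) := {ffun 'I_n -> bool}.

Definition f162 (n : nat) (x : config n) : config n :=
  [ffun i => r162 (x (ord_pred i)) (x i) (x (ordS i))].

Definition schedule (n : nat) := seq {set 'I_n}.

Definition is_schedule (n : nat) (D : schedule n) : Prop :=
  (forall B, B \in D -> B != set0) /\
  (forall i : 'I_n, count (fun B : {set 'I_n} => i \in B) D = 1).

Definition block_update (n : nat) (B : {set 'I_n}) (x : config n) : config n :=
  [ffun i => if i \in B then f162 x i else x i].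

Definition sched_fun (n : nat) (D : schedule n) (x : config n) : config n :=
  foldl (fun y B => block_update B y) x D.

Definition blk (n : nat) (D : schedule n) (u : 'I_n) : nat :=
  find (fun B : {set 'I_n} => u \in B) D.

Inductive label := Plus | Minus.

Definition lab (n : nat) (D : schedule n) (u v : 'I_n) : label :=
  if blk D v <= blk D u then Plus else Minus.

Definition sched_equiv (n : nat) (D D' : schedule n) : Prop :=
  forall i : 'I_n,
    lab D i (ordS i) = lab D' i (ordS i) /\
    lab D (ordS i) i = lab D' (ordS i) i.

Definition special162 (n : nat) (D D' : schedule n) : Prop :=
  ~ sched_equiv D D' /\ (forall x : config n, sched_fun D x = sched_fun D' x).

(* Main.v *)
Require Import Defs.
From mathcomp Require Import all_boot.
Set Implicit Arguments.

Arguments sched_fun : simpl never.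
Arguments blk : simpl never.
Section L.
Variable n : nat.
Implicit Types (D : schedule n) (x : config n) (c : 'I_n).

Lemma sf_cons B D x : sched_fun (B :: D) x = sched_fun D (block_update B x).
Proof. by []. Qed.

Lemma L1 D x c : count (fun B : {set 'I_n} => c \in B) D = 0 -> sched_fun D x c = x c.
Proof.
elim: D x => [|B D IH] x //=.
case: (boolP (c \in B)) => //= cB H.
by rewrite sf_cons IH // /block_update ffunE (negbTE cB).
Qed.

Lemma L3 D x c k : k <= blk D c -> sched_fun (take k D) x c = x c.
Proof.
elim: D x k => [|B D IH] x [|k] //=.
rewrite /blk /=; case: (boolP (c \in B)) => //= cB H.
by rewrite sf_cons IH // /block_update ffunE (negbTE cB).
Qed.

Lemma L2 D x c : count (fun B : {set 'I_n} => c \in B) D = 1 ->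
  sched_fun D x c = f162 (sched_fun (take (blk D c) D) x) c.
Proof.
elim: D x => [|B D IH] x //=.
rewrite /blk /=; case: (boolP (c \in B)) => /= cB H.
  rewrite sf_cons L1; last by case: H.
  by rewrite /block_update ffunE cB.
by rewrite sf_cons IH.
Qed.

Lemma L5 D x c k : count (fun B : {set 'I_n} => c \in B) D = 1 -> blk D c < k ->
  sched_fun (take k D) x c = sched_fun D x c.
Proof.
elim: D x k => [|B D IH] x [|k] //=.
rewrite /blk /=; case: (boolP (c \in B)) => /= cB H Hk.
  have H0 : count (fun B : {set 'I_n} => c \in B) D = 0 by case: H.
  rewrite !sf_cons !L1 //.
  by apply/eqP; rewrite -leqn0 -H0 -{2}(cat_take_drop k D) count_cat leq_addr.
by rewrite !sf_cons IH.
Qed.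
End L.
Arguments L1 {n D} x {c} _.
Arguments L2 {n D} x {c} _.
Arguments L3 {n D} x {c k} _.
Arguments L5 {n D} x {c k} _ _.

Lemma ordS_neq n (i : 'I_n) : 2 <= n -> ordS i != i.
Proof.
move=> Hn; apply/eqP => /(congr1 val) /=.
have Hi := ltn_ord i.
case: (ltnP i.+1 n) => H.
  by rewrite modn_small // => /eqP; rewrite eqn_leq ltnn.
have -> : i.+1 = n by apply/eqP; rewrite eqn_leq H Hi.
rewrite modnn => Hi0; move: H; rewrite -Hi0; case: n Hn {Hi Hi0 i} => [|[|m]] //.
Qed.

Lemma key n (D D' : schedule n) (i : 'I_n) : 2 <= n -> is_schedule D -> is_schedule D' ->
  blk D (ordS i) < blk D i -> blk D' i <= blk D' (ordS i) ->
  exists x, sched_fun D x i != sched_fun D' x i.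
Proof.
move=> Hn [_ HD] [_ HD'] H1 H2.
have Hne := ordS_neq i Hn.
exists [ffun j => j != i].
rewrite (L2 _ (HD i)) (L2 _ (HD' i)).
rewrite /f162 !ffunE /r162.
rewrite (L3 _ (leqnn _)) (L3 _ (leqnn _)) (L3 _ H2).
rewrite (L5 _ (HD _) H1) (L2 _ (HD _)) /f162 !ffunE /r162 ordSK.
rewrite (L3 _ (leqnn _)) (L3 _ (ltnW H1)) !ffunE Hne eqxx /=.
by rewrite !orbT.
Qed.

Theorem mainTheorem19 (n : nat) (D D' : schedule n) :
  2 <= n -> is_schedule D -> is_schedule D' -> special162 D D' ->
  forall i : 'I_n, lab D (ordS i) i = lab D' (ordS i) i.
Proof.
move=> Hn HD HD' [_ Heq] i; rewrite /lab.
case: (leqP (blk D i) (blk D (ordS i))) => H1;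
case: (leqP (blk D' i) (blk D' (ordS i))) => H2 //.
  have [x /eqP] := key i Hn HD' HD H2 H1.
  by rewrite Heq.
have [x /eqP] := key i Hn HD HD' H1 H2.
by rewrite Heq.
Qed.
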